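(* Let $z_1,z_2,\dots$ be a stationary finite-state Markov chain with stationary distribution $\mu$, and for $w\in\mathcal{K}$ and $N\in\mathbb{N}$ let $g^N(w)=\frac1N\sum_{i=1}^N\nabla f(w;z_i)$. Suppose $\|\nabla f(w;z)\|\le G$ for all $w\in\mathcal{K}$, $z\in\Omega$. Let $K\in\{1,\dots,N\}$ and $n=\lfloor N/K\rfloor$. Then for every $\delta>K(n-1)d_{\mathrm{mix}}(K)$ and every fixed $w\in\mathcal{K}$ (not depending on the chain), with probability at least $1-\delta$, \[ \|g^N(w)-\nabla F(w)\|\le\frac{6G}{\sqrt n}\Big(1+\sqrt{\log(K/\delta')}\Big)+\frac{2GK}{N}, \] where $\delta'=\delta-K(n-1)d_{\mathrm{mix}}(K)$.
   Context: $\Omega$ is the finite state space; $\mathcal{K}\subseteq\mathbb{R}^d$; $f(\cdot;z)$ is differentiable for each $z\in\Omega$ and $F(w)=\mathbb{E}_{z\sim\mu}[f(w;z)]$. For probability measures $P,Q$ on $\Omega$, $\|P-Q\|_{TV}=\sup_A|P(A)-Q(A)|$; $P^s(z,\cdot)$ denotes the law of $z_{s+1}$ given $z_1=z$, and $d_{\mathrm{mix}}(s)=\sup_{z\in\Omega}\|P^s(z,\cdot)-\mu\|_{TV}$. $\log$ is the natural logarithm. *)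

(* Defs.v *)
From HB Require Import structures.
From mathcomp Require Import all_boot all_order all_algebra.
From mathcomp Require Import all_classical all_reals all_analysis.
Set Implicit Arguments. Unset Strict Implicit. Unset Printing Implicit Defensive.
Import Order.TTheory GRing.Theory Num.Theory.
Import numFieldNormedType.Exports.
Local Open Scope ring_scope.

Section Defs.
Variable R : realType.

Definition enorm (d : nat) (v : 'rV[R]_d) : R :=
  Num.sqrt (\sum_(i < d) (v ord0 i) ^+ 2).

Definition grad (d : nat) (h : 'rV[R]_d -> R) (w : 'rV[R]_d) : 'rV[R]_d :=
  \row_(i < d) 'D_(delta_mx ord0 i) h w.

Variable Omega : finType.

Definition tv_dist (p q : Omega -> R) : R :=
  \big[Num.max/0]_(A : {set Omega}) `|\sum_(x in A) (p x - q x)|.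

(* s-step transition kernel: Pn P s z y = P(z_{s+1} = y | z_1 = z). *)
Fixpoint Pn (P : Omega -> Omega -> R) (s : nat) : Omega -> Omega -> R :=
  match s with
  | 0 => fun z y => if z == y then 1 else 0
  | s'.+1 => fun z y => \sum_(x : Omega) Pn P s' z x * P x y
  end.

Definition dmix (P : Omega -> Omega -> R) (mu : Omega -> R) (s : nat) : R :=
  \big[Num.max/0]_(z : Omega) tv_dist (Pn P s z) mu.

Definition is_distribution (mu : Omega -> R) : Prop :=
  (forall z, 0 <= mu z) /\ \sum_(z : Omega) mu z = 1.

Definition is_stochastic (P : Omega -> Omega -> R) : Prop :=
  (forall z y, 0 <= P z y) /\ (forall z, \sum_(y : Omega) P z y = 1).

Definition is_stationary (P : Omega -> Omega -> R) (mu : Omega -> R) : Prop :=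
  forall y, \sum_(z : Omega) mu z * P z y = mu y.

Fixpoint chainw (P : Omega -> Omega -> R) (z : Omega) (s : seq Omega) : R :=
  match s with
  | [::] => 1
  | y :: s' => P z y * chainw P y s'
  end.

Definition pathw (P : Omega -> Omega -> R) (mu : Omega -> R) (s : seq Omega) : R :=
  match s with
  | [::] => 1
  | z :: s' => mu z * chainw P z s'
  end.

Definition chain_prob (P : Omega -> Omega -> R) (mu : Omega -> R) (N : nat)
  (E : N.-tuple Omega -> bool) : R :=
  \sum_(x : N.-tuple Omega | E x) pathw P mu x.

End Defs.

(* Main.v *)
Require Import Defs.
From HB Require Import structures.
From mathcomp Require Import all_boot all_order all_algebra.
From mathcomp Require Import all_classical all_reals all_analysis.
From mathcomp Require Import ring lra zify.
Import Order.TTheory GRing.Theory Num.Theory.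
Import numFieldNormedType.Exports.
Local Open Scope ring_scope.
Set Implicit Arguments. Unset Strict Implicit.

Section Chain.
Variables (R : realType) (Omega : finType) (P : Omega -> Omega -> R) (mu : Omega -> R).
Hypotheses (HP : is_stochastic P) (Hmu : is_distribution mu) (Hst : is_stationary P mu).

Fixpoint Cx (n : nat) (z : Omega) (h : seq Omega -> R) : R :=
  if n is n'.+1 then \sum_a P z a * Cx n' a (fun s => h (a :: s)) else h [::].

Definition Ep n (h : seq Omega -> R) :=
  if n is n'.+1 then \sum_a mu a * Cx n' a (fun s => h (a :: s)) else h [::].

Lemma tuple_sum n (F : n.+1.-tuple Omega -> R) :
  \sum_x F x = \sum_a \sum_(t : n.-tuple Omega) F [tuple of a :: t].
Proof.
rewrite pair_bigA /=.
rewrite (reindex (fun p : Omega * n.-tuple Omega => [tuple of p.1 :: p.2])) //=.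
exists (fun x => (thead x, behead_tuple x)) => x _ /=.
  by case: x => a t; congr pair; apply: val_inj.
by case/tupleP: x => a t; apply: val_inj.
Qed.

Lemma chain_sum n z (F : seq Omega -> R) :
  \sum_(t : n.-tuple Omega) chainw P z t * F t = Cx n z F.
Proof.
elim: n z F => [|n IH] z F /=.
  rewrite (eq_bigr (fun _ => F [::])); last by move=> t _; rewrite tuple0 /= mul1r.
  by rewrite sumr_const card_tuple expn0 mulr1n.
rewrite tuple_sum; apply: eq_bigr => a _.
rewrite -IH big_distrr /=; apply: eq_bigr => t _; by rewrite mulrA.
Qed.

Lemma Ep_sum n (F : seq Omega -> R) :
  \sum_(t : n.-tuple Omega) pathw P mu t * F t = Ep n F.
Proof.
case: n F => [|n] F /=.
  rewrite (eq_bigr (fun _ => F [::])); last by move=> t _; rewrite tuple0 /= mul1r.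
  by rewrite sumr_const card_tuple expn0 mulr1n.
rewrite tuple_sum; apply: eq_bigr => a _.
rewrite -chain_sum big_distrr /=; apply: eq_bigr => t _; by rewrite mulrA.
Qed.

Lemma chain_prob_Ep N (E : N.-tuple Omega -> bool) (E' : seq Omega -> bool) :
  (forall x, E x = E' x) -> chain_prob P mu E = Ep N (fun s => (E' s)%:R).
Proof.
move=> HE; rewrite /chain_prob -Ep_sum big_mkcond /=; apply: eq_bigr => x _.
by rewrite HE; case: (E' x); rewrite ?mulr1 ?mulr0.
Qed.

Lemma eq_Cx n z (h1 h2 : seq Omega -> R) :
  (forall s, size s = n -> h1 s = h2 s) -> Cx n z h1 = Cx n z h2.
Proof.
elim: n z h1 h2 => [|n IH] z h1 h2 H /=; first by apply: H.
apply: eq_bigr => a _; congr (_ * _); apply: IH => s Hs; apply: H => /=; by rewrite Hs.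
Qed.

Lemma Cx_const n z c : Cx n z (fun _ => c) = c.
Proof.
elim: n z => [|n IH] z //=.
under eq_bigr do rewrite IH.
by rewrite -big_distrl /= HP.2 mul1r.
Qed.

Lemma Cx_split a b z h :
  Cx (a + b) z h = Cx a z (fun u => Cx b (last z u) (fun v => h (u ++ v))).
Proof.
elim: a z h => [|a IH] z h //.
rewrite addSn /=; apply: eq_bigr => x _; by rewrite IH.
Qed.

Lemma Cx_last n z (Phi : Omega -> R) :
  Cx n z (fun u => Phi (last z u)) = \sum_y Pn P n z y * Phi y.
Proof.
elim: n z Phi => [|n IH] z Phi.
  rewrite /= (bigD1 z) //= eqxx mul1r big1 ?addr0 // => y /negbTE.
  by rewrite eq_sym => ->; rewrite mul0r.
rewrite -addn1 Cx_split.
transitivity (Cx n z (fun u => (fun y => \sum_a P y a * Phi a) (last z u))).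
  apply: eq_Cx => s _ /=; apply: eq_bigr => a _ /=; by rewrite cats1 last_rcons.
rewrite (IH z (fun y => \sum_a P y a * Phi a)) addn1 /=.
under [RHS]eq_bigr do rewrite big_distrl /=.
rewrite exchange_big /=; apply: eq_bigr => x _; rewrite big_distrr /=.
by apply: eq_bigr => y _; rewrite mulrA.
Qed.

Lemma Ep_stat n h : Ep n.+1 (fun s => h (behead s)) = Ep n h.
Proof.
case: n h => [|n] h /=.
  by rewrite -big_distrl /= Hmu.2 mul1r.
under eq_bigr do rewrite big_distrr /=.
rewrite exchange_big /=; apply: eq_bigr => b _.
by under eq_bigr do rewrite mulrA; rewrite -big_distrl /= Hst.
Qed.

Lemma Ep_drop j m h : Ep (j + m) (fun s => h (drop j s)) = Ep m h.
Proof.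
elim: j h => [|j IH] h.
  have -> : (fun s => h (drop 0 s)) = h by apply: funext => s; rewrite drop0.
  by rewrite add0n.
rewrite addSn -(IH h) -(Ep_stat (j + m)).
congr (Ep _ _); apply: funext => s; by case: s.
Qed.


Fixpoint Ix (n : nat) (h : seq Omega -> R) : R :=
  if n is n'.+1 then \sum_a mu a * Ix n' (fun s => h (a :: s)) else h [::].

Lemma Ix_le n (g1 g2 : seq Omega -> R) :
  (forall s, g1 s <= g2 s) -> Ix n g1 <= Ix n g2.
Proof.
elim: n g1 g2 => [|n IH] g1 g2 H /=; first exact: H.
apply: ler_sum => a _; apply: ler_wpM2l; first exact: Hmu.1.
by apply: IH => s; apply: H.
Qed.

Lemma Ix_const n c : Ix n (fun _ => c) = c.
Proof.
elim: n => [|n IH] //=.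
under eq_bigr do rewrite IH.
by rewrite -big_distrl /= Hmu.2 mul1r.
Qed.

Lemma Ix_ge0 n g : (forall s, 0 <= g s) -> 0 <= Ix n g.
Proof. by move=> H; rewrite -(Ix_const n 0); apply: Ix_le. Qed.

Lemma Ix_le1 n g : (forall s, g s <= 1) -> Ix n g <= 1.
Proof. by move=> H; rewrite -(Ix_const n 1); apply: Ix_le. Qed.

Lemma Pn_ge0 s z y : 0 <= Pn P s z y.
Proof.
elim: s z y => [|s IH] z y /=; first by case: (z == y).
by apply: sumr_ge0 => x _; apply: mulr_ge0 => //; apply: HP.1.
Qed.

Lemma Pn_sum1 s z : \sum_y Pn P s z y = 1.
Proof.
elim: s z => [|s IH] z /=.
  rewrite (bigD1 z) //= eqxx big1 ?addr0 // => y /negbTE.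
  by rewrite eq_sym => ->.
rewrite exchange_big /=.
under eq_bigr do rewrite -big_distrr /= HP.2 mulr1.
exact: IH.
Qed.

Lemma tv_bound (p q phi : Omega -> R) :
  (forall x, 0 <= phi x <= 1) ->
  `|\sum_x (p x - q x) * phi x| <= tv_dist p q.
Proof.
move=> Hphi.
have key : forall (p q : Omega -> R), \sum_x (p x - q x) * phi x <= tv_dist p q.
  move=> p' q'.
  pose A : {set Omega} := [set y | q' y < p' y].
  apply: (@le_trans _ _ (\sum_(x in A) (p' x - q' x))).
    rewrite [X in _ <= X]big_mkcond /=; apply: ler_sum => x _; rewrite inE.
    have /andP [h0 h1] := Hphi x.
    case: ltrP => H.
      by rewrite ler_piMr // subr_ge0 ltW.
    by apply: mulr_le0_ge0 => //; rewrite subr_le0.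
  apply: le_trans (ler_norm _) _.
  rewrite /tv_dist.
  exact: (le_bigmax _ (fun A : {set Omega} => `|\sum_(x in A) (p' x - q' x)|)).
rewrite ler_norml; apply/andP; split; last exact: key.
rewrite lerNl -sumrN.
have -> : tv_dist p q = tv_dist q p.
  rewrite /tv_dist; apply: eq_bigr => A _.
  by rewrite -normrN -sumrN; congr `|_|; apply: eq_bigr => x _; rewrite opprB.
apply: le_trans (key q p); apply: ler_sum => x _; by rewrite -mulNr opprB.
Qed.

Lemma tv_dmix K z : tv_dist (Pn P K z) mu <= dmix P mu K.
Proof. exact: (le_bigmax _ (fun z => tv_dist (Pn P K z) mu)). Qed.

Variables (k : nat) (x0 : Omega).

Fixpoint stride n (s : seq Omega) :=
  if n is n'.+1 then head x0 s :: stride n' (drop k.+1 s) else [::].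

Fixpoint Dx m z (g : seq Omega -> R) :=
  if m is m'.+1 then \sum_a Pn P k.+1 z a * Dx m' a (fun t => g (a :: t)) else g [::].

Lemma D_I m z g : (forall s, 0 <= g s <= 1) ->
  `|Dx m z g - Ix m g| <= m%:R * dmix P mu k.+1.
Proof.
elim: m z g => [|m IH] z g H /=; first by rewrite subrr normr0 mul0r.
have -> : \sum_a Pn P k.+1 z a * Dx m a (fun t => g (a :: t)) -
   \sum_a mu a * Ix m (fun s => g (a :: s)) =
   \sum_a Pn P k.+1 z a * (Dx m a (fun t => g (a :: t)) - Ix m (fun s => g (a :: s)))
   + \sum_a (Pn P k.+1 z a - mu a) * Ix m (fun s => g (a :: s)).
  rewrite -big_split /= -sumrB; apply: eq_bigr => a _; ring.
apply: le_trans (ler_normD _ _) _.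
rewrite mulrSr mulrDl mul1r lerD //; last first.
  apply: le_trans (tv_bound _ _ _) (tv_dmix _ _) => a.
  apply/andP; split; [apply: Ix_ge0 | apply: Ix_le1] => s; by case/andP: (H (a :: s)).
apply: le_trans (ler_norm_sum _ _ _) _.
apply: le_trans (_ : \sum_a Pn P k.+1 z a * (m%:R * dmix P mu k.+1) <= _).
  apply: ler_sum => a _; rewrite normrM ger0_norm ?Pn_ge0 //.
  by apply: ler_wpM2l; [apply: Pn_ge0 | apply: IH => s; apply: H].
by rewrite -big_distrl Pn_sum1 /= mul1r.
Qed.


Lemma D_C m e z g :
  Cx (m * k.+1 + e) z (fun s => g (stride m (drop k s))) = Dx m z g.
Proof.
elim: m z g => [|m IH] z g.
  by rewrite mul0n add0n /= Cx_const.
rewrite mulSn -addnA Cx_split.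
transitivity (Cx k.+1 z (fun u => (fun y => Dx m y (fun t => g (y :: t))) (last z u))).
  apply: eq_Cx => u Hu; rewrite -IH; apply: eq_Cx => v _; congr g.
  case/lastP: u Hu => [|u l] //; rewrite size_rcons => -[Hu].
  rewrite -cats1 -catA drop_size_cat //= last_cat /=.
  by [].
by rewrite (Cx_last k.+1 z (fun y => Dx m y (fun t => g (y :: t)))).
Qed.

Lemma chain_bad N j n' (B : seq Omega -> R) :
  (j <= k)%N -> (j + n' * k.+1 < N)%N -> (forall s, 0 <= B s <= 1) ->
  Ep N (fun s => B (stride n'.+1 (drop j s))) <=
  Ix n'.+1 B + n'%:R * dmix P mu k.+1.
Proof.
move=> Hj HN HB.
have -> : N = (j + (n' * k.+1 + (N - j - n' * k.+1).-1).+1)%N.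
  move: HN; generalize (n' * k.+1)%N => m HN; lia.
rewrite (Ep_drop j _ (fun s => B (stride n'.+1 s))) /=.
under eq_bigr do rewrite (D_C n' _ _ (fun t => B (_ :: t))).
rewrite -lerBlDl -sumrB.
under eq_bigr do rewrite -mulrBr.
apply: le_trans (_ : \sum_a mu a * (n'%:R * dmix P mu k.+1) <= _).
  apply: ler_sum => a _; apply: ler_wpM2l; first exact: Hmu.1.
  apply: le_trans (ler_norm _) _; apply: D_I => s; exact: HB.
by rewrite -big_distrl /= Hmu.2 mul1r.
Qed.

Lemma IxZ n c g : Ix n (fun s => c * g s) = c * Ix n g.
Proof.
elim: n g => [|n IH] g //=; rewrite big_distrr /=; apply: eq_bigr => a _.
by rewrite IH mulrCA.
Qed.

Lemma IxD n g1 g2 : Ix n (fun s => g1 s + g2 s) = Ix n g1 + Ix n g2.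
Proof.
elim: n g1 g2 => [|n IH] g1 g2 //=; rewrite -big_split /=; apply: eq_bigr => a _.
by rewrite IH mulrDr.
Qed.

Lemma Ix_sum n (F : Omega -> seq Omega -> R) :
  Ix n (fun s => \sum_a F a s) = \sum_a Ix n (F a).
Proof.
elim: n F => [|n IH] F //=.
under eq_bigr do rewrite (IH (fun a s => F a (_ :: s))) big_distrr.
by rewrite exchange_big.
Qed.

Lemma exp_bound (x : R) : `|x| <= 1 -> expR x <= 1 + x + 2 * x ^+ 2.
Proof.
move=> Hx; set y := x / 2.
have [Hy1 Hy2] : -(1/2) <= y /\ y <= 1/2.
  by move: Hx; rewrite ler_norml /y => /andP [? ?]; split; lra.
have e1 : expR x = expR y * expR y by rewrite -expRD /y; congr expR; field.
have e2 : 1 - y <= expR (- y) by have := expR_ge1Dx (- y); rewrite addrC.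
have e3 : expR y * expR (- y) = 1 by rewrite expRxMexpNx_1.
have e4 : 0 < expR y := expR_gt0 y.
have e5 : expR y * (1 - y) <= 1.
  by rewrite -[X in _ <= X]e3 ler_wpM2l // ltW.
have e6 : 0 <= expR y * (1 - y) by apply: mulr_ge0; [exact: ltW | lra].
have e7 : expR x * (1 - y) ^+ 2 <= 1.
  have -> : expR x * (1 - y) ^+ 2 = (expR y * (1 - y)) ^+ 2 by rewrite e1; ring.
  exact: exprn_ile1.
have Q : 1 <= (1 - y) ^+ 2 * (1 + x + 2 * x ^+ 2).
  have -> : x = 2 * y by rewrite /y; field.
  have h8 : 0 <= y ^+ 2 * ((1 - 2 * y) * (5 - 4 * y)) by apply: mulr_ge0; [apply: sqr_ge0 | apply: mulr_ge0; lra].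
  have -> : (1 - y) ^+ 2 * (1 + 2 * y + 2 * (2 * y) ^+ 2) = 1 + y ^+ 2 * ((1 - 2 * y) * (5 - 4 * y)) by ring.
  lra.
have e8 : 0 <= expR x := expR_ge0 x.
have e9 : 0 <= 1 + x + 2 * x ^+ 2.
  have : 0 <= x ^+ 2 by apply: sqr_ge0.
  move: Hx; rewrite ler_norml => /andP [? ?]; lra.
apply: le_trans (_ : expR x * ((1 - y) ^+ 2 * (1 + x + 2 * x ^+ 2)) <= _).
  by rewrite ler_peMr.
by rewrite mulrA ler_piMl.
Qed.

Lemma hoeff (phi : Omega -> R) c lam :
  0 <= lam -> \sum_a mu a * phi a = 0 -> (forall a, `|phi a| <= c) -> lam * c <= 1 ->
  \sum_a mu a * expR (lam * phi a) <= expR (2 * lam ^+ 2 * c ^+ 2).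
Proof.
move=> Hl H0 Hc Hlc.
apply: le_trans (_ : \sum_a mu a * (1 + lam * phi a + 2 * (lam ^+ 2 * c ^+ 2)) <= _).
  apply: ler_sum => a _; apply: ler_wpM2l; first exact: Hmu.1.
  have Ha : `|lam * phi a| <= 1.
    rewrite normrM ger0_norm //; apply: le_trans Hlc; exact: ler_wpM2l.
  apply: le_trans (exp_bound Ha) _; rewrite lerD2l ler_wpM2l // exprMn ler_wpM2l ?exprn_ge0 //.
  rewrite -real_normK ?num_real // ; apply: lerXn2r; rewrite ?nnegrE ?normr_ge0 //.
  exact: le_trans (normr_ge0 _) (Hc a).
under eq_bigr do rewrite !mulrDr mulr1.
rewrite !big_split /= -!big_distrl /= Hmu.2.
under eq_bigr do rewrite mulrCA.
rewrite -big_distrr /= H0 mulr0 addr0 mul1r mulrA.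
by apply: le_trans (expR_ge1Dx _); rewrite mulrA.
Qed.

Definition BD c (h : seq Omega -> R) :=
  forall u a b v, `|h (u ++ a :: v) - h (u ++ b :: v)| <= c.

Lemma mcd n h c lam : BD c h -> 0 <= lam -> lam * c <= 1 ->
  Ix n (fun s => expR (lam * (h s - Ix n h))) <= expR (2 * lam ^+ 2 * c ^+ 2 * n%:R).
Proof.
elim: n h => [|n IH] h Hh Hl Hlc.
  by rewrite /= subrr mulr0 mulr0 expR0.
rewrite [Ix n.+1 h]/=.
set M := \sum_a mu a * Ix n (fun s => h (a :: s)).
rewrite /=.
have HBa : forall a, BD c (fun s => h (a :: s)) by move=> a u a' b v; exact: (Hh (a :: u)).
apply: le_trans (_ : \sum_a mu a * (expR (2 * lam ^+ 2 * c ^+ 2 * n%:R) *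
     expR (lam * (Ix n (fun s => h (a :: s)) - M))) <= _).
  apply: ler_sum => a _; apply: ler_wpM2l; first exact: Hmu.1.
  have -> : (fun s => expR (lam * (h (a :: s) - M))) =
    (fun s => expR (lam * (Ix n (fun s => h (a :: s)) - M)) * expR (lam * (h (a :: s) - Ix n (fun s => h (a :: s))))).
    by apply: funext => s; rewrite -expRD; congr expR; ring.
  rewrite IxZ mulrC ler_wpM2r ?expR_ge0 //; exact: IH.
under eq_bigr do rewrite mulrCA.
rewrite -big_distrr /= -(addn1 n) natrD mulrDr mulr1 expRD ler_wpM2l ?expR_ge0 //.
apply: hoeff => //.
- rewrite -/M; under eq_bigr do rewrite mulrBr.
  by rewrite sumrB -big_distrl /= Hmu.2 mul1r subrr.
- move=> a; rewrite /M.
  have -> : Ix n (fun s => h (a :: s)) - \sum_a0 mu a0 * Ix n (fun s => h (a0 :: s)) =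
     \sum_b mu b * (Ix n (fun s => h (a :: s)) - Ix n (fun s => h (b :: s))).
    by under [RHS]eq_bigr do rewrite mulrBr; rewrite sumrB -big_distrl /= Hmu.2 mul1r.
  apply: le_trans (ler_norm_sum _ _ _) _.
  apply: le_trans (_ : \sum_b mu b * c <= _); last by rewrite -big_distrl /= Hmu.2 mul1r.
  apply: ler_sum => b _; rewrite normrM ger0_norm ?Hmu.1 // ler_wpM2l ?Hmu.1 //.
  rewrite -[X in X - _]addr0 -(Ix_const n 0) -IxD -(mulN1r (Ix n _)) -IxZ -IxD.
  rewrite ler_norml; apply/andP; split.
    rewrite -(Ix_const n (- c)); apply: Ix_le => s.
    have := Hh [::] a b s; rewrite ler_norml => /andP [+ _] /=; lra.
  rewrite -(Ix_const n c); apply: Ix_le => s.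
  have := Hh [::] a b s; rewrite ler_norml => /andP [_ +] /=; lra.
Qed.

Lemma chern n h c lam t : BD c h -> 0 <= lam -> lam * c <= 1 ->
  Ix n (fun s => ((Ix n h + t < h s)%R)%:R) <= expR (- (lam * t) + 2 * lam ^+ 2 * c ^+ 2 * n%:R).
Proof.
move=> Hh Hl Hlc.
apply: le_trans (_ : Ix n (fun s => expR (- (lam * t)) * expR (lam * (h s - Ix n h))) <= _).
  apply: Ix_le => s; case: ltrP => H /=.
    rewrite -expRD; apply: le_trans (expR_ge1Dx _); rewrite lerDl.
    have -> : - (lam * t) + lam * (h s - Ix n h) = lam * (h s - Ix n h - t) by ring.
    by apply: mulr_ge0 => //; lra.
  by rewrite mulr_ge0 ?expR_ge0.
by rewrite IxZ expRD ler_wpM2l ?expR_ge0 //; apply: mcd.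
Qed.

Lemma stride_sum (V : zmodType) (F : Omega -> V) n s :
  \sum_(y <- stride n s) F y = \sum_(i < n) F (nth x0 s (i * k.+1)).
Proof.
elim: n s => [|n IH] s /=; first by rewrite big_nil big_ord0.
rewrite big_cons big_ord_recl /= IH nth0; congr (_ + _); apply: eq_bigr => i _.
by rewrite nth_drop mulSn.
Qed.

Lemma pathw_ge0 s : 0 <= pathw P mu s.
Proof.
have H : forall z s, 0 <= chainw P z s.
  move=> z s'; elim: s' z => [|y s' IH] z //=; apply: mulr_ge0 => //; exact: HP.1.
case: s => [|z s] //=; apply: mulr_ge0 => //; exact: Hmu.1.
Qed.

Lemma Ep_const N c : Ep N (fun _ => c) = c.
Proof.
case: N => [|N] //=; under eq_bigr do rewrite Cx_const.
by rewrite -big_distrl /= Hmu.2 mul1r.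
Qed.

Lemma pathw_sum N : \sum_(x : N.-tuple Omega) pathw P mu x = 1.
Proof.
rewrite -(Ep_const N 1) -Ep_sum; apply: eq_bigr => x _; by rewrite mulr1.
Qed.

Lemma dmix_ge0 K : 0 <= dmix P mu K.
Proof. exact: bigmax_ge_id. Qed.

Variable d : nat.

Definition dot (u v : 'rV[R]_d) := \sum_i u ord0 i * v ord0 i.

Lemma dot_ge0 (u : 'rV[R]_d) : 0 <= dot u u.
Proof. by apply: sumr_ge0 => i _; rewrite -expr2 sqr_ge0. Qed.

Lemma enormE (u : 'rV[R]_d) : enorm u = Num.sqrt (dot u u).
Proof. by rewrite /enorm /dot; congr Num.sqrt; apply: eq_bigr => i _; rewrite expr2. Qed.

Lemma enorm_ge0 (u : 'rV[R]_d) : 0 <= enorm u.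
Proof. exact: sqrtr_ge0. Qed.

Lemma enorm_sq (u : 'rV[R]_d) : enorm u ^+ 2 = dot u u.
Proof. by rewrite enormE sqr_sqrtr // dot_ge0. Qed.

Lemma dotC (u v : 'rV[R]_d) : dot u v = dot v u.
Proof. by apply: eq_bigr => i _; rewrite mulrC. Qed.

Lemma dotDl (u1 u2 v : 'rV[R]_d) : dot (u1 + u2) v = dot u1 v + dot u2 v.
Proof. by rewrite /dot -big_split; apply: eq_bigr => i _; rewrite mxE mulrDl. Qed.

Lemma dotZl c (u v : 'rV[R]_d) : dot (c *: u) v = c * dot u v.
Proof. by rewrite /dot big_distrr; apply: eq_bigr => i _; rewrite mxE /= mulrA. Qed.

Lemma dotDr (u v1 v2 : 'rV[R]_d) : dot u (v1 + v2) = dot u v1 + dot u v2.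
Proof. by rewrite dotC dotDl !(dotC u). Qed.

Lemma dotZr c (u v : 'rV[R]_d) : dot u (c *: v) = c * dot u v.
Proof. by rewrite dotC dotZl dotC. Qed.

Lemma dot0 (u : 'rV[R]_d) : dot u u = 0 -> forall v, dot u v = 0.
Proof.
move=> H v; rewrite /dot big1 // => i _.
have : u ord0 i * u ord0 i == 0.
  move/eqP: H; rewrite /dot psumr_eq0; last by move=> j _; rewrite -expr2 sqr_ge0.
  by move/allP => /(_ i (mem_index_enum _)) /implyP; apply.
by rewrite mulf_eq0 orbb => /eqP ->; rewrite mul0r.
Qed.

Lemma CS (u v : 'rV[R]_d) : dot u v <= enorm u * enorm v.
Proof.
set A := enorm u; set B := enorm v.
have hA : A ^+ 2 = dot u u := enorm_sq u.
have hB : B ^+ 2 = dot v v := enorm_sq v.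
have hA0 : 0 <= A := enorm_ge0 u.
have hB0 : 0 <= B := enorm_ge0 v.
have key : 0 <= (A * B) * (A * B - dot u v).
  have : 0 <= dot (B *: u - A *: v) (B *: u - A *: v) by exact: dot_ge0.
  rewrite !dotDl !dotDr -!scaleNr !dotZl !dotZr -hA -hB (dotC v u).
  set x := dot u v => H.
  have -> : A * B * (A * B - x) = (B * (B * A ^+ 2) + B * (- A * x) + (- A * (B * x) + - A * (- A * B ^+ 2))) / 2.
    by field.
  by apply: divr_ge0.
have [AB0|ABpos] := eqVneq (A * B) 0.
  rewrite AB0; move/eqP: AB0; rewrite mulf_eq0 => /orP [] /eqP H0.
    by rewrite dot0 // -hA H0 expr0n.
  by rewrite dotC dot0 // -hB H0 expr0n.
have ABgt : 0 < A * B by rewrite lt0r ABpos mulr_ge0.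
by move: key; rewrite pmulr_rge0 // subr_ge0.
Qed.

Lemma enormD (u v : 'rV[R]_d) : enorm (u + v) <= enorm u + enorm v.
Proof.
have h0 : 0 <= enorm u + enorm v by rewrite addr_ge0 ?enorm_ge0.
rewrite -(ger0_norm h0) -sqrtr_sqr enormE ler_sqrt ?sqr_ge0 //.
rewrite dotDl !dotDr (dotC v u) sqrrD -!enorm_sq.
have := CS u v; lra.
Qed.

Lemma enormZ c (u : 'rV[R]_d) : enorm (c *: u) = `|c| * enorm u.
Proof.
rewrite !enormE dotZl dotZr mulrA -expr2 sqrtrM ?sqr_ge0 //.
by rewrite sqrtr_sqr.
Qed.

Lemma enormN (u : 'rV[R]_d) : enorm (- u) = enorm u.
Proof. by rewrite -scaleN1r enormZ normrN normr1 mul1r. Qed.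

Lemma enormB (u v : 'rV[R]_d) : enorm u - enorm v <= enorm (u - v).
Proof.
have := enormD (u - v) v; rewrite subrK; lra.
Qed.

Lemma enorm_sum (I : Type) (r : seq I) (F : I -> 'rV[R]_d) :
  enorm (\sum_(i <- r) F i) <= \sum_(i <- r) enorm (F i).
Proof.
elim: r => [|a r IH].
  by rewrite !big_nil enormE /dot big1 ?sqrtr0 // => i _; rewrite mxE mul0r.
rewrite !big_cons; apply: le_trans (enormD _ _) _; by rewrite lerD2l.
Qed.

Variable Y : Omega -> 'rV[R]_d.
Hypothesis HY0 : forall i, \sum_a mu a * Y a ord0 i = 0.

Definition Ssum (s : seq Omega) := \sum_(y <- s) Y y.

Lemma second_moment n c : (forall a, enorm (Y a) <= c) ->
  Ix n (fun s => dot (Ssum s) (Ssum s)) <= n%:R * c ^+ 2.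
Proof.
move=> Hc.
elim: n => [|n IH].
  rewrite /= /Ssum big_nil mul0r /dot big1 // => i _; by rewrite mxE mul0r.
rewrite /=.
have E : forall a s, dot (Ssum (a :: s)) (Ssum (a :: s)) =
   dot (Y a) (Y a) + 2 * dot (Y a) (Ssum s) + dot (Ssum s) (Ssum s).
  move=> a s; rewrite /Ssum big_cons -/(Ssum s) dotDl !dotDr (dotC (Ssum s) (Y a)); ring.
under eq_bigr do rewrite (funext (E _)) !IxD Ix_const IxZ.
rewrite (eq_bigr (fun a => mu a * dot (Y a) (Y a) + 2 * (mu a * Ix n (fun s => dot (Y a) (Ssum s)))
    + mu a * Ix n (fun s => dot (Ssum s) (Ssum s)))); last by move=> a _; ring.
rewrite !big_split /= -big_distrr /=.
have -> : \sum_a mu a * Ix n (fun s => dot (Y a) (Ssum s)) = 0.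
  transitivity (Ix n (fun s => \sum_a mu a * dot (Y a) (Ssum s))).
    by rewrite (Ix_sum n (fun a s => mu a * dot (Y a) (Ssum s))); apply: eq_bigr => a _; rewrite IxZ.
  rewrite -[RHS](Ix_const n 0); congr Ix; apply: funext => s.
  rewrite /dot; under eq_bigr do rewrite big_distrr /=.
  rewrite exchange_big /= big1 // => i _.
  by under eq_bigr do rewrite mulrA; rewrite -big_distrl /= HY0 mul0r.
rewrite -big_distrl /= Hmu.2 mul1r mulr0 addr0 -(addn1 n) natrD mulrDl mul1r addrC lerD //.
apply: le_trans (_ : \sum_a mu a * c ^+ 2 <= _); last by rewrite -big_distrl /= Hmu.2 mul1r.
apply: ler_sum => a _; apply: ler_wpM2l; first exact: Hmu.1.
rewrite -enorm_sq; apply: lerXn2r; rewrite ?nnegrE ?enorm_ge0 //.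
exact: le_trans (enorm_ge0 _) (Hc a).
Qed.

Lemma first_moment n c a : (forall a, enorm (Y a) <= c) -> 0 < a ->
  Ix n (fun s => enorm (Ssum s)) <= n%:R * c ^+ 2 / (2 * a) + a / 2.
Proof.
move=> Hc Ha.
apply: le_trans (_ : Ix n (fun s => dot (Ssum s) (Ssum s) / (2 * a) + a / 2) <= _).
  apply: Ix_le => s; rewrite -enorm_sq.
  set x := enorm (Ssum s).
  have -> : x ^+ 2 / (2 * a) + a / 2 = x + (x - a) ^+ 2 / (2 * a) by field; rewrite gt_eqF.
  by rewrite lerDl divr_ge0 ?sqr_ge0 // mulr_ge0 // ltW.
rewrite IxD Ix_const lerD2r.
rewrite (_ : (fun s => dot (Ssum s) (Ssum s) / (2 * a)) = (fun s => (2 * a)^-1 * dot (Ssum s) (Ssum s))); last first.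
  by apply: funext => s; rewrite mulrC.
rewrite IxZ mulrC ler_wpM2r ?invr_ge0 ?mulr_ge0 ?(ltW Ha) //.
exact: second_moment.
Qed.

End Chain.

Lemma big_blocks (V : zmodType) (F : nat -> V) n K :
  \sum_(0 <= i < n * K) F i = \sum_(j < K) \sum_(k < n) F (j + k * K)%N.
Proof.
elim: n => [|n IH].
  by rewrite mul0n big_geq // big1 // => j _; rewrite big_ord0.
rewrite mulSnr (big_cat_nat _ (leq_addr _ _)) //= IH.
rewrite -[X in \sum_(X <= _ < _) _]add0n big_addn addKn big_mkord -big_split /=.
apply: eq_bigr => j _; by rewrite big_ord_recr /= addnC.
Qed.

Section Grad.
Variables (R : realType) (Omega : finType) (d : nat).

Lemma grad_lin (f : 'rV[R]_d -> Omega -> R) (mu : Omega -> R) w :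
  (forall z x, differentiable (fun v => f v z) x) ->
  grad (fun v => \sum_z mu z * f v z) w = \sum_z mu z *: grad (fun u => f u z) w.
Proof.
move=> Hd; apply/rowP => i; rewrite !mxE summxE.
under [RHS]eq_bigr do rewrite !mxE.
set e := delta_mx ord0 i.
have H : forall r : seq Omega, is_derive w e (fun v => \sum_(z <- r) mu z * f v z)
                   (\sum_(z <- r) mu z * 'D_e (fun u => f u z) w).
  elim => [|a r IH].
    have -> : (fun v => \sum_(z <- [::]) mu z * f v z) = cst 0.
      by apply: funext => v; rewrite big_nil.
    rewrite big_nil; exact: is_derive_cst.
  have -> : (fun v => \sum_(z <- a :: r) mu z * f v z) =
     (mu a \*: (fun u => f u a)) + (fun v => \sum_(z <- r) mu z * f v z).
    by apply: funext => v; rewrite big_cons.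
  rewrite big_cons; apply: is_deriveD => //.
  apply: is_deriveZ; apply: derivableP; exact: diff_derivable.
by rewrite (@derive_val _ _ _ _ _ _ _ (H (index_enum Omega))).
Qed.
End Grad.

Lemma arith1 (R : realType) (G q r Nr Kr nr : R) :
  0 <= G -> 0 < q -> 0 <= r -> 0 < Nr -> 0 < Kr -> nr = q ^+ 2 ->
  nr * Kr <= Nr -> Nr - nr * Kr <= Kr ->
  Nr^-1 * (Kr * (2 * G * q + 6 * G * r * q) + (Nr - nr * Kr) * (2 * G))
    <= 6 * G / q * (1 + r) + 2 * G * Kr / Nr.
Proof.
move=> G0 q0 r0 N0 K0 nE HnK HR.
have nr0 : 0 < nr by rewrite nE exprn_gt0.
set T := 2 * G * q + 6 * G * r * q.
have T0 : 0 <= T by rewrite /T addr_ge0 // !mulr_ge0 // ltW.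
rewrite mulrDr lerD //; last first.
  have -> : 2 * G * Kr / Nr = Nr^-1 * (Kr * (2 * G)) by ring.
  apply: ler_wpM2l; first by rewrite invr_ge0 ltW.
  by apply: ler_wpM2r => //; rewrite mulr_ge0.
apply: (@le_trans _ _ ((nr * Kr)^-1 * (Kr * T))).
  apply: ler_wpM2r; first by rewrite mulr_ge0 // ltW.
  by rewrite lef_pV2 // ?posrE ?mulr_gt0.
have -> : (nr * Kr)^-1 * (Kr * T) = 2 * (G / q) + 6 * (G / q) * r.
  by rewrite /T nE; field; rewrite !gt_eqF.
have -> : 6 * G / q * (1 + r) = 6 * (G / q) + 6 * (G / q) * r by ring.
have : 0 <= G / q by rewrite divr_ge0 // ltW.
lra.
Qed.

Unset Implicit Arguments.

Theorem lemmaA3 (R : realType) (Omega : finType) (d : nat)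
  (Kset : set 'rV[R]_d) (f : 'rV[R]_d -> Omega -> R)
  (P : Omega -> Omega -> R) (mu : Omega -> R) (G : R)
  (N K : nat) (delta : R) (w : 'rV[R]_d) :
  (forall z x, differentiable (fun v => f v z) x) ->
  is_stochastic P -> is_distribution mu -> is_stationary P mu ->
  (forall v z, Kset v -> enorm (grad (fun u => f u z) v) <= G) ->
  (1 <= K <= N)%N ->
  let n := (N %/ K)%N in
  K%:R * (n.-1)%:R * dmix P mu K < delta ->
  Kset w ->
  let F := fun v => \sum_(z : Omega) mu z * f v z in
  let delta' := delta - K%:R * (n.-1)%:R * dmix P mu K in
  let gN := fun x : N.-tuple Omega =>
      N%:R^-1 *: \sum_(i < N) grad (fun u => f u (tnth x i)) w in
  1 - delta <=
  chain_prob P mu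
    (fun x : N.-tuple Omega =>
       enorm (gN x - grad F w) <=
         6 * G / Num.sqrt n%:R * (1 + Num.sqrt (ln (K%:R / delta')))
         + 2 * G * K%:R / N%:R).
Proof.
move=> Hdiff HP Hmu Hst HG HKN n Hdel Hw.
cbv zeta.
set F := fun v => \sum_(z : Omega) mu z * f v z.
set delta' := delta - K%:R * (n.-1)%:R * dmix P mu K.
have [x0 _] : exists x0 : Omega, true.
  case: (pickP (fun _ : Omega => true)) => [x0 _|H0]; first by exists x0.
  exfalso; have := Hmu.2; rewrite big_pred0 // => /eqP; rewrite eq_sym oner_eq0 //.
have G0 : 0 <= G := le_trans (enorm_ge0 _) (HG w x0 Hw).
case/andP: HKN => HK1 HKN.
have [k Kk] : exists k, K = k.+1 by exists K.-1; rewrite prednK.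
subst K.
have HnK : (n * k.+1 <= N)%N by rewrite /n leq_trunc_div.
have [n' Hn] : exists n', n = n'.+1.
  case E : n => [|n']; last by exists n'.
  by move: E; rewrite /n => /eqP; rewrite -leqn0 leqNgt divn_gt0 // HKN.
have N0 : (0 < N)%N by apply: leq_trans HKN.
have dm0 : 0 <= dmix P mu k.+1 := dmix_ge0 P mu k.+1.
have X0 : 0 <= k.+1%:R * (n.-1)%:R * dmix P mu k.+1 by rewrite !mulr_ge0.
have d'pos : 0 < delta' by rewrite /delta' subr_gt0.
have dpos : 0 < delta by apply: le_lt_trans Hdel.
have [Hd1|Hd1] := lerP 1 delta.
  apply: (@le_trans _ _ (0)); first by rewrite subr_le0.
  rewrite /chain_prob; apply: sumr_ge0 => x _; exact: pathw_ge0.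
have d'lt1 : delta' < 1 by rewrite /delta'; lra.
set L := ln (k.+1%:R / delta').
have HL : 0 < L.
  rewrite /L ln_gt0 // ltr_pdivlMr // mul1r.
  by apply: lt_le_trans d'lt1 _; rewrite ler1n.
set g := fun a => grad (fun u => f u a) w.
have gF : grad F w = \sum_a mu a *: g a by apply: grad_lin.
set Y := fun a => g a - grad F w.
have HgG : forall a, enorm (g a) <= G := fun a => HG w a Hw.
have HFG : enorm (grad F w) <= G.
  rewrite gF; apply: le_trans (enorm_sum _ _) _.
  apply: (@le_trans _ _ (\sum_a mu a * G)); last by rewrite -big_distrl /= Hmu.2 mul1r.
  apply: ler_sum => a _; rewrite enormZ ger0_norm ?Hmu.1 //; apply: ler_wpM2l => //; exact: Hmu.1.
have HY : forall a, enorm (Y a) <= 2 * G.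
  move=> a; apply: le_trans (enormD _ _) _; rewrite enormN; have := HgG a; lra.
have HYd : forall a b, enorm (Y a - Y b) <= 2 * G.
  move=> a b; have -> : Y a - Y b = g a - g b by rewrite /Y opprB addrA subrK.
  apply: le_trans (enormD _ _) _; rewrite enormN; have := HgG a; have := HgG b; lra.
have HY0 : forall i, \sum_a mu a * Y a ord0 i = 0.
  have HY0v : \sum_a mu a *: Y a = 0.
    rewrite /Y; under eq_bigr do rewrite scalerBr.
    by rewrite sumrB -scaler_suml Hmu.2 scale1r -gF subrr.
  move=> i; transitivity ((\sum_a mu a *: Y a) ord0 i).
    by rewrite summxE; apply: eq_bigr => a _; rewrite [RHS]mxE.
  by rewrite HY0v mxE.
have Hdev : forall x : N.-tuple Omega,
   N%:R^-1 *: \sum_(i < N) g (tnth x i) - grad F w = N%:R^-1 *: \sum_(i < N) Y (tnth x i).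
  move=> x; rewrite /Y sumrB scalerBr sumr_const card_ord -(scaler_nat N (grad F w)) scalerA mulVf ?scale1r //.
  by rewrite pnatr_eq0 -lt0n.
set q := Num.sqrt n%:R.
set r := Num.sqrt L.
have nR0 : 0 < n%:R :> R by rewrite Hn ltr0n.
have q0 : 0 < q by rewrite /q sqrtr_gt0.
have qq : q ^+ 2 = n%:R by rewrite /q sqr_sqrtr // ltW.
have r0 : 0 <= r by exact: sqrtr_ge0.
have rr : r ^+ 2 = L by rewrite /r sqr_sqrtr // ltW.
have NR0 : 0 < N%:R :> R by rewrite ltr0n.
have Hcrude : forall x : N.-tuple Omega,
    enorm (N%:R^-1 *: \sum_(i < N) g (tnth x i) - grad F w) <= 2 * G.
  move=> x; rewrite Hdev enormZ ger0_norm ?invr_ge0 ?ler0n //.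
  apply: (@le_trans _ _ (N%:R^-1 * (N%:R * (2 * G)))); last by rewrite mulKf // gt_eqF.
  apply: ler_wpM2l; first by rewrite invr_ge0 ltW.
  apply: le_trans (enorm_sum _ _) _.
  apply: (@le_trans _ _ (\sum_(i < N) 2 * G)); first by apply: ler_sum => i _; exact: HY.
  by rewrite sumr_const card_ord [X in _ <= X]mulr_natl.
have RHS0 : 6 * G / q * r <= 6 * G / q * (1 + r) + 2 * G * k.+1%:R / N%:R.
  have h1 : 0 <= 6 * G / q by rewrite divr_ge0 ?mulr_ge0 // ltW.
  have h2 : 0 <= 2 * G * k.+1%:R / N%:R by rewrite divr_ge0 ?mulr_ge0 // ltW.
  have h3 : 6 * G / q * r <= 6 * G / q * (1 + r) by apply: ler_wpM2l => //; lra.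
  lra.
case: (boolP ((G == 0) || (n%:R < L))) => Hc.
  have Hall : forall x : N.-tuple Omega,
      enorm (N%:R^-1 *: \sum_(i < N) g (tnth x i) - grad F w) <=
      6 * G / q * (1 + r) + 2 * G * k.+1%:R / N%:R.
    move=> x; apply: le_trans (Hcrude x) _; apply: le_trans _ RHS0.
    case/orP: Hc => [/eqP G00|HnL].
      by rewrite G00 !mulr0 !mul0r.
    have rq : q <= r by rewrite /q /r ler_sqrt // ltW.
    apply: (@le_trans _ _ (6 * G / q * q)); last by apply: ler_wpM2l => //; rewrite divr_ge0 ?mulr_ge0 // ltW.
    rewrite divfK ?gt_eqF //; lra.
  rewrite /chain_prob (eq_bigl xpredT); last by move=> x; rewrite /= Hall.
  by rewrite pathw_sum //; lra.
move: Hc; rewrite negb_or -leNgt => /andP [Gn0 HLn].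
have Gpos : 0 < G by rewrite lt0r Gn0.
have rq : r <= q by rewrite /q /r ler_sqrt // ltW.
set T := 2 * G * q + 6 * G * r * q.
pose h := fun s : seq Omega => enorm (Ssum Y s).
pose bad := fun (j : nat) (s : seq Omega) => (T < h (stride k x0 n'.+1 (drop j s)))%R.
have Hmean : Ix mu n'.+1 h <= 2 * G * q.
  apply: le_trans (first_moment Hmu HY0 n'.+1 (a := 2 * G * q) HY _) _.
    by rewrite !mulr_gt0.
  rewrite -Hn -qq le_eqVlt; apply/orP; left; apply/eqP; field.
  by rewrite !gt_eqF.
have HBD : BD (2 * G) h.
  move=> u a b v; rewrite /h /Ssum !big_cat !big_cons /=.
  have E : (\sum_(y <- u) Y y + (Y a + \sum_(y <- v) Y y)) -
           (\sum_(y <- u) Y y + (Y b + \sum_(y <- v) Y y)) = Y a - Y b.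
    by rewrite opprD addrACA subrr add0r opprD addrACA subrr addr0.
  rewrite ler_norml; apply/andP; split.
    have := enormB (\sum_(y <- u) Y y + (Y b + \sum_(y <- v) Y y))
                   (\sum_(y <- u) Y y + (Y a + \sum_(y <- v) Y y)).
    have E' : (\sum_(y <- u) Y y + (Y b + \sum_(y <- v) Y y)) -
           (\sum_(y <- u) Y y + (Y a + \sum_(y <- v) Y y)) = Y b - Y a.
      by rewrite opprD addrACA subrr add0r opprD addrACA subrr addr0.
    rewrite E' lerNl => H1; rewrite opprB; exact: le_trans H1 (HYd b a).
  have := enormB (\sum_(y <- u) Y y + (Y a + \sum_(y <- v) Y y))
                 (\sum_(y <- u) Y y + (Y b + \sum_(y <- v) Y y)).
  by rewrite E => H1; apply: le_trans H1 (HYd a b).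
have Hbad : forall j : 'I_k.+1,
    Ep P mu N (fun s => (bad j s)%:R) <= delta' / k.+1%:R + n'%:R * dmix P mu k.+1.
  move=> j.
  apply: le_trans (chain_bad HP Hmu Hst x0 (N := N) (j := j) (n' := n')
                     (B := fun s => (T < h s)%R%:R) _ _ _) _.
  - by rewrite -ltnS.
  - have H1 : (j + n' * k.+1 < k.+1 + n' * k.+1)%N by rewrite ltn_add2r.
    by rewrite (leq_trans H1) // -mulSn -Hn.
  - by move=> s; case: (T < h s)%R; rewrite /= ?lexx ?ler01.
  rewrite lerD2r.
  apply: (@le_trans _ _ (Ix mu n'.+1 (fun s => ((Ix mu n'.+1 h + 6 * G * r * q < h s)%R)%:R))).
    apply: (Ix_le Hmu) => s; case: (ltrP T (h s)) => HT /=; last by rewrite ler0n.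
    suff -> : (Ix mu n'.+1 h + 6 * G * r * q < h s)%R by [].
    by apply: le_lt_trans HT; rewrite /T lerD2r.
  apply: le_trans (@chern _ _ mu Hmu n'.+1 h (2 * G) (r / (2 * G * q)) (6 * G * r * q) HBD _ _) _.
  - by rewrite divr_ge0 // ?mulr_ge0 // ltW.
  - have -> : r / (2 * G * q) * (2 * G) = r / q by field; rewrite !gt_eqF.
    by rewrite ler_pdivrMr // mul1r.
  have -> : - (r / (2 * G * q) * (6 * G * r * q)) +
      2 * (r / (2 * G * q)) ^+ 2 * (2 * G) ^+ 2 * n'.+1%:R = - L.
    by rewrite -Hn -qq -rr; field; rewrite !gt_eqF.
  by rewrite expRN /L lnK ?posrE ?divr_gt0 // invf_div.
have HnK' : (n'.+1 * k.+1 <= N)%N by rewrite -Hn.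
have Hgood : forall x : N.-tuple Omega, [forall j : 'I_k.+1, ~~ bad j x] ->
   enorm (N%:R^-1 *: \sum_(i < N) g (tnth x i) - grad F w) <=
   6 * G / q * (1 + r) + 2 * G * k.+1%:R / N%:R.
  move=> x /forallP Hg.
  rewrite Hdev enormZ ger0_norm ?invr_ge0 ?ler0n //.
  have Hsum : \sum_(i < N) Y (tnth x i) =
     \sum_(j < k.+1) Ssum Y (stride k x0 n'.+1 (drop j x)) +
     \sum_(n'.+1 * k.+1 <= i < N) Y (nth x0 x i).
    rewrite (eq_bigr (fun i : 'I_N => Y (nth x0 x i))); last by move=> i _; rewrite (tnth_nth x0).
    rewrite -(big_mkord xpredT (fun i => Y (nth x0 x i))).
    rewrite (big_cat_nat (leq0n _) HnK') big_blocks; congr (_ + _); apply: eq_bigr => j _.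
    by rewrite /Ssum stride_sum; apply: eq_bigr => i _; rewrite nth_drop.
  rewrite Hsum.
  apply: (@le_trans _ _ (N%:R^-1 * (k.+1%:R * T + (N%:R - n'.+1%:R * k.+1%:R) * (2 * G)))); last first.
    apply: arith1 => //.
    - by rewrite qq Hn.
    - by rewrite -natrM ler_nat.
    - rewrite -natrM -natrB // ler_nat -Hn /n {1}(divn_eq N k.+1) addKn.
      by rewrite ltnW // ltn_pmod.
  apply: ler_wpM2l; first by rewrite invr_ge0 ler0n.
  apply: le_trans (enormD _ _) _; apply: lerD.
    apply: le_trans (enorm_sum _ _) _.
    apply: (@le_trans _ _ (\sum_(j < k.+1) T)).
      by apply: ler_sum => j _; have := Hg j; rewrite /bad /h -leNgt.
    by rewrite sumr_const card_ord [X in _ <= X]mulr_natl.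
  apply: le_trans (enorm_sum _ _) _.
  apply: (@le_trans _ _ (\sum_(n'.+1 * k.+1 <= i < N) (2 * G))).
    by apply: ler_sum => i _; exact: HY.
  by rewrite sumr_const_nat -natrM -natrB // [X in _ <= X]mulr_natl.
rewrite /chain_prob big_mkcond /=.
apply: (@le_trans _ _ (\sum_(x : N.-tuple Omega) pathw P mu x * (1 - \sum_(j < k.+1) (bad j x)%:R))).
  under eq_bigr do rewrite mulrBr mulr1 big_distrr /=.
  rewrite sumrB pathw_sum // exchange_big /= lerD2l lerN2.
  under eq_bigr => j _ do rewrite (Ep_sum P mu N (fun s => (bad j s)%:R)).
  apply: (@le_trans _ _ (\sum_(j < k.+1) (delta' / k.+1%:R + n'%:R * dmix P mu k.+1))).
    by apply: ler_sum => j _; exact: Hbad.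
  rewrite sumr_const card_ord -[X in X <= _]mulr_natl.
  have -> : k.+1%:R * (delta' / k.+1%:R + n'%:R * dmix P mu k.+1) =
            delta' + k.+1%:R * n'%:R * dmix P mu k.+1.
    by field.
  by rewrite /delta' Hn /= subrK.
apply: ler_sum => x _.
case: (boolP [forall j : 'I_k.+1, ~~ bad j x]) => Hx.
  rewrite (Hgood x Hx) -[X in _ <= X]mulr1; apply: ler_wpM2l; first exact: pathw_ge0.
  by rewrite gerBl; apply: sumr_ge0 => j _; rewrite ler0n.
move: Hx; rewrite negb_forall => /existsP [j]; rewrite negbK => Hj.
apply: (@le_trans _ _ 0).
  apply: mulr_ge0_le0; first exact: pathw_ge0.
  rewrite subr_le0 (bigD1 j) //= Hj lerDl; apply: sumr_ge0 => i _; by rewrite ler0n.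
by case: ifP => _ //; exact: pathw_ge0.
Qed.
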